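(* Let $n\ge1$, $\mathbf{k}=(k_1,\dots,k_n)$ positive integers, $D\in\mathcal{D}_{\mathbf{k}}$, and $R=R(D)$. Then the directed multigraph $G_R$ is balanced: every vertex $a$ of $G_R$ has in-degree equal to its out-degree, and both equal $|S(a)|$.
   Context: $|\mathbf{k}|=k_1+\cdots+k_n$, $N=n+|\mathbf{k}|$. $\mathcal{D}_{\mathbf{k}}$: sequences $(a_1,\dots,a_N)$ whose positive entries are $k_1,\dots,k_n$ in order, other entries $-1$, all partial sums $a_1+\cdots+a_{i-1}\ge0$. SW-word: $S^{k_j}$ for up step $k_j$, $W$ for $-1$. Filling Algorithm producing $T(D)$: $n$ columns, column $i$ with $k_i+1$ cells in rows $1,\dots,k_i+1$; place $1$ at top of column 1; having placed $1,\dots,i-1$, the lowest filled entry of column $j$ is active if not in row $k_j+1$; if the $i$-th letter is $W$ place $i$ below the smallest active entry, otherwise at the top of the leftmost empty column; continue until $1,\dots,N$ placed. Entries of $T(D)$ are indices; $t_i$ is the top index of column $i$. Ranking Algorithm producing $R(D)$: ranks $0,\dots,k_1$ to column-1 indices top to bottom; for $i=2,\dots,n$, if index $t_i-1$ has rank $a$, column $i$ gets ranks $a,\dots,a+k_i$ top to bottom. $G_R$ is the directed multigraph whose vertices are the ranks appearing in $R$, with one directed edge for each index of $T(D)$: if the index is $t_i$ with rank $a$, the edge is $a\to a+k_i$; if the index is not in row 1 and has rank $b$, the edge is $b\to b-1$. $S(a)$ is the set of indices with rank $a$. *)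

(* Defs.v *)
From mathcomp Require Import all_boot all_order all_algebra.
Set Implicit Arguments. Unset Strict Implicit. Unset Printing Implicit Defensive.
Import Order.TTheory GRing.Theory Num.Theory.

(* Conventions: k = [:: k_1; ...; k_n] is a seq nat, columns are numbered
   0..n-1 (column j here is column j+1 of the paper), rows are numbered
   0..k_j (row r here is row r+1 of the paper), indices are 1..N as in the
   paper. *)

Section Algo.
Variable k : seq nat.

Definition nk := size k.
Definition kk (j : nat) : nat := nth 0 k j.
Definition bigN := nk + sumn k.

Definition inDk (D : seq int) : Prop :=
  [/\ size D = bigN,
      [seq x <- D | (0 < x)%R] = [seq Posz m | m <- k],
      all (fun x : int => (0 < x)%R || (x == (-1)%R)) D &
      forall i, i < size D -> (0 <= \sum_(j < i) nth 0%R D j)%R].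

(* state: the n columns, each listed top to bottom *)
Definition col_of_state (cols : seq (seq nat)) j := nth [::] cols j.

(* lowest filled entry of column j is active: the column is nonempty and
   its lowest entry is not in the last row (row k_j + 1 of the paper) *)
Definition active (cols : seq (seq nat)) (j : nat) : bool :=
  (col_of_state cols j != [::]) && (size (col_of_state cols j) < kk j + 1).

Definition lowest (cols : seq (seq nat)) j := last 0 (col_of_state cols j).

Definition pick_active (cols : seq (seq nat)) : option nat :=
  match [seq j <- iota 0 nk | active cols j] with
  | [::] => None
  | j0 :: js => Some (foldl (fun b j => if lowest cols j < lowest cols b
                                       then j else b) j0 js)
  end.

(* place index i, whose letter is W iff a_i = -1 (i.e. a_i < 0) *)
Definition fill_step (D : seq int) (cols : seq (seq nat)) (i : nat) :=
  if (nth 0%R D i.-1 < 0)%R then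
    match pick_active cols with
    | Some j => set_nth [::] cols j (rcons (col_of_state cols j) i)
    | None => cols
    end
  else
    let j := find (fun c : seq nat => c == [::]) cols in
    if j < nk then set_nth [::] cols j [:: i] else cols.

Definition fillT (D : seq int) : seq (seq nat) :=
  foldl (fill_step D) ([:: 1] :: nseq nk.-1 [::]) (iota 2 (size D).-1).

Variable D : seq int.
Definition T := fillT D.

Definition colT (x : nat) : nat := find (fun c : seq nat => x \in c) T.
Definition rowT (x : nat) : nat := index x (col_of_state T (colT x)).
Definition topT (j : nat) : nat := head 0 (col_of_state T j).

(* bases m = ranks of the top cells of columns 0..m-1 *)
Fixpoint bases (m : nat) : seq nat :=
  match m with
  | 0 => [::]
  | m'.+1 =>
      let bs := bases m' in
      rcons bs (if m' == 0 then 0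
                else let x := (topT m').-1 in nth 0 bs (colT x) + rowT x)
  end.

Definition rankR (x : nat) : nat := nth 0 (bases nk) (colT x) + rowT x.

Definition indices : seq nat := iota 1 (size D).

Definition vertices : seq nat := [seq rankR x | x <- indices].

Definition edgeOf (x : nat) : nat * nat :=
  if rowT x == 0 then (rankR x, rankR x + kk (colT x))
  else (rankR x, (rankR x).-1).

Definition edges : seq (nat * nat) := [seq edgeOf x | x <- indices].

Definition indeg (a : nat) : nat := count (fun e => e.2 == a) edges.
Definition outdeg (a : nat) : nat := count (fun e => e.1 == a) edges.

Definition Sset (a : nat) : seq nat := [seq x <- indices | rankR x == a].

End Algo.

(* Main.v *)
Require Import Defs.
From mathcomp Require Import all_boot all_order all_algebra.
From mathcomp Require Import all_boot all_order all_algebra zify.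
Set Implicit Arguments. Unset Strict Implicit. Unset Printing Implicit Defensive.
Import Order.TTheory GRing.Theory Num.Theory.

Lemma mem_nth_flatten (s : seq (seq nat)) j x :
  x \in nth [::] s j -> x \in flatten s.
Proof.
elim: s j => [|c s IH] [|j] //=.
- by rewrite mem_cat => ->.
- by rewrite mem_cat => /IH ->; rewrite orbT.
Qed.

Lemma uniq_nth_flatten (s : seq (seq nat)) j :
  uniq (flatten s) -> uniq (nth [::] s j).
Proof.
elim: s j => [|c s IH] [|j] //=; rewrite cat_uniq => /and3P[h1 _ h3] //.
exact: IH.
Qed.

Lemma find_col (s : seq (seq nat)) j x :
  uniq (flatten s) -> j < size s -> x \in nth [::] s j ->
  find (fun c => x \in c) s = j.
Proof.
elim: s j => [|c s IH] [|j] //=; first by move=> _ _ ->.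
rewrite cat_uniq => /and3P[_ hd hu] hj hx.
have hxs := mem_nth_flatten hx.
have -> : (x \in c) = false.
  apply/negP => hc; move/hasPn: hd => /(_ x hxs); by rewrite hc.
by rewrite (IH j).
Qed.

Lemma count_col (c : seq nat) (p q : nat -> bool) :
  uniq c -> {in c, forall x, p x = q (index x c)} ->
  count p c = count q (iota 0 (size c)).
Proof.
move=> hu hpq; rewrite (eq_in_count hpq).
set f := fun x => q (index x c).
have -> : count f c = count f (mkseq (nth 0 c) (size c)) by rewrite mkseq_nth.
rewrite /mkseq count_map; apply: eq_in_count => r; rewrite mem_iota => /andP[_ hr].
by rewrite /preim /f /= index_uniq.
Qed.

Lemma col_count (b kj a : nat) :
  count (fun r => (if r == 0 then (b + r, b + r + kj) else (b + r, (b + r).-1)).2 == a)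
     (iota 0 kj.+1) =
  count (fun r => (if r == 0 then (b + r, b + r + kj) else (b + r, (b + r).-1)).1 == a)
     (iota 0 kj.+1).
Proof.
have e1 : iota 1 kj = map (addn 1) (iota 0 kj) by rewrite -iotaDl.
have e2 : iota 0 kj.+1 = iota 0 kj ++ [:: kj] by rewrite -addn1 iotaD.
rewrite [in LHS]/= e1 count_map e2 count_cat /= addn0.
rewrite [in RHS](@eq_count _ _ (fun r => b + r == a)); last first.
  by move=> r /=; case: ifP.
rewrite addnC addn0; congr (_ + _).
apply: eq_count => r /=; rewrite /preim /=; congr (_ == _); lia.
by case: ifP.
Qed.

Lemma indeg_outdeg_gen (k : seq nat) (D : seq int) a :
  size (T k D) = nk k ->
  (forall j, j < nk k -> size (nth [::] (T k D) j) = kk k j + 1) ->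
  perm_eq (flatten (T k D)) (indices D) ->
  indeg k D a = outdeg k D a.
Proof.
move=> h1 h2 h3.
have hu : uniq (flatten (T k D)) by rewrite (perm_uniq h3) iota_uniq.
rewrite /indeg /outdeg /edges !count_map -!(permP h3) !count_flatten.
rewrite -(mkseq_nth [::] (T k D)) h1 /mkseq -!map_comp.
congr sumn; apply/eq_in_map => j; rewrite mem_iota => /andP[_ hj] /=.
set c := nth [::] (T k D) j.
set b := nth 0 (bases k D (nk k)) j.
have key : forall x, x \in c -> colT k D x = j /\ rowT k D x = index x c.
  move=> x hx; have e : colT k D x = j.
    by rewrite /colT (find_col hu _ hx) // h1.
  by split => //; rewrite /rowT e.
have huc : uniq c by exact: uniq_nth_flatten.
rewrite (@count_col c _ (fun r => (if r == 0 then (b + r, b + r + kk k j) else (b + r, (b + r).-1)).2 == a)) //; last first.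
  move=> x hx; have [e1 e2] := key x hx.
  by rewrite /preim /edgeOf /rankR /= e1 e2.
rewrite [RHS](@count_col c _ (fun r => (if r == 0 then (b + r, b + r + kk k j) else (b + r, (b + r).-1)).1 == a)) //; last first.
  move=> x hx; have [e1 e2] := key x hx.
  by rewrite /preim /edgeOf /rankR /= e1 e2.
have -> : size c = kk k j + 1 by exact: h2.
rewrite addn1; exact: col_count.
Qed.

Lemma outdeg_S (k : seq nat) (D : seq int) a :
  outdeg k D a = size (Sset k D a).
Proof.
rewrite /outdeg /Sset /edges count_map size_filter; apply: eq_count => x.
by rewrite /preim /edgeOf /=; case: ifP.
Qed.
Definition cnt (D : seq int) m := count (fun x : int => (0 < x)%R) (take m D).

Lemma L_filter (k : seq nat) (D : seq int) m :
  [seq x <- D | (0 < x)%R] = [seq Posz m | m <- k] ->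
  [seq x <- take m D | (0 < x)%R] = map Posz (take (cnt D m) k).
Proof.
move=> H; rewrite -(cat_take_drop m D) filter_cat in H.
have := f_equal (take (cnt D m)) H.
rewrite take_size_cat ?size_filter // => ->.
by rewrite map_take.
Qed.

Lemma L_Ps (k : seq nat) (D : seq int) m :
  [seq x <- D | (0 < x)%R] = [seq Posz m | m <- k] ->
  sumn (map absz [seq x <- take m D | (0 < x)%R]) = sumn (take (cnt D m) k).
Proof.
move=> H; rewrite (L_filter _ H) -map_comp.
by congr sumn; rewrite (@eq_map _ _ _ id) ?map_id.
Qed.

Lemma L_cntS (D : seq int) m :
  m < size D -> cnt D m.+1 = cnt D m + (0 < nth 0%R D m)%R.
Proof.
by move=> hm; rewrite /cnt (take_nth 0%R hm) -cats1 count_cat /= addn0.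
Qed.

Lemma L_cnt_le (D : seq int) m : cnt D m <= m.
Proof.
rewrite /cnt; apply: (leq_trans (count_size _ _)); rewrite size_take.
by case: ifP => // /negbT; rewrite -leqNgt.
Qed.

Lemma L_sum (k : seq nat) (D : seq int) :
  [seq x <- D | (0 < x)%R] = [seq Posz m | m <- k] ->
  all (fun x : int => (0 < x)%R || (x == (-1)%R)) D ->
  forall i, i <= size D ->
  (\sum_(j < i) nth 0%R D j = Posz (sumn (take (cnt D i) k)) - Posz (i - cnt D i))%R.
Proof.
move=> hf ha; elim=> [|i IH] hi.
  by rewrite big_ord0 /cnt !take0 /= subrr.
rewrite big_ord_recr /= IH ?(ltnW hi) //.
rewrite -!(L_Ps _ hf) /cnt (take_nth 0%R hi) filter_rcons -!cats1 count_cat /= addn0.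
have hle := L_cnt_le D i; rewrite /cnt in hle.
move: (all_nthP 0%R ha i hi) => /orP [hp | /eqP hm].
- rewrite hp map_cat sumn_cat /=.
  case: (nth 0%R D i) hp => [n|n] // _ /=. lia.
- rewrite hm /=. lia.
Qed.

Lemma L_cnt_mono (D : seq int) m m' : m <= m' -> cnt D m <= cnt D m'.
Proof.
move=> h; rewrite /cnt -[in X in _ <= X](cat_take_drop m (take m' D)) count_cat.
by rewrite take_takel // leq_addr.
Qed.

Lemma L_cntD (k : seq nat) (D : seq int) :
  [seq x <- D | (0 < x)%R] = [seq Posz m | m <- k] ->
  cnt D (size D) = size k.
Proof. by move=> hf; rewrite /cnt take_size -size_filter hf size_map. Qed.

Lemma L_dyck (k : seq nat) (D : seq int) :
  [seq x <- D | (0 < x)%R] = [seq Posz m | m <- k] ->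
  all (fun x : int => (0 < x)%R || (x == (-1)%R)) D ->
  (forall i, i < size D -> (0 <= \sum_(j < i) nth 0%R D j)%R) ->
  size D = size k + sumn k ->
  forall i, i <= size D -> i <= cnt D i + sumn (take (cnt D i) k).
Proof.
move=> hf ha hd hs i; rewrite leq_eqVlt => /orP [/eqP -> | hi].
  by rewrite (L_cntD hf) take_size hs.
have := hd i hi; rewrite (L_sum hf ha (ltnW hi)).
have := L_cnt_le D i; lia.
Qed.

Lemma sumn_map_le (s : seq nat) (f g : nat -> nat) :
  (forall j, j \in s -> f j <= g j) -> sumn (map f s) <= sumn (map g s).
Proof.
elim: s => [|x s IH] //= h; apply: leq_add; first by apply: h; rewrite inE eqxx.
by apply: IH => j hj; apply: h; rewrite inE hj orbT.
Qed.

Lemma sumn_map_eq (s : seq nat) (f g : nat -> nat) :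
  (forall j, j \in s -> f j <= g j) -> sumn (map f s) = sumn (map g s) ->
  forall j, j \in s -> f j = g j.
Proof.
elim: s => [|x s IH] //= h e j; rewrite inE => /orP [/eqP -> | hj].
- have h1 : f x <= g x by apply: h; rewrite inE eqxx.
  have h2 : sumn (map f s) <= sumn (map g s).
    by apply: sumn_map_le => i hi; apply: h; rewrite inE hi orbT.
  lia.
- apply: IH => //; first by move=> i hi; apply: h; rewrite inE hi orbT.
  have h1 : f x <= g x by apply: h; rewrite inE eqxx.
  have h2 : sumn (map f s) <= sumn (map g s).
    by apply: sumn_map_le => i hi; apply: h; rewrite inE hi orbT.
  lia.
Qed.

Lemma sumn_map_add1 (s : seq nat) (f : nat -> nat) :
  sumn (map (fun j => f j + 1) s) = sumn (map f s) + size s.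
Proof. elim: s => [|x s IH] //=; rewrite IH; lia. Qed.

Lemma sumn_map_0 (s : seq nat) (f : nat -> nat) :
  (forall j, j \in s -> f j = 0) -> sumn (map f s) = 0.
Proof.
elim: s => [|x s IH] //= h; rewrite h ?inE ?eqxx // IH // => j hj.
by apply: h; rewrite inE hj orbT.
Qed.

Lemma L_capsum (k : seq nat) c :
  c <= size k ->
  sumn (map (fun j => if j < c then kk k j + 1 else 0) (iota 0 (size k))) =
  c + sumn (take c k).
Proof.
move=> hc; rewrite -(subnKC hc) iotaD map_cat sumn_cat add0n.
rewrite (@sumn_map_0 (iota c (size k - c))); last first.
  by move=> j; rewrite mem_iota => /andP [h _]; rewrite ltnNge h.
rewrite addn0.
have -> : map (fun j => if j < c then kk k j + 1 else 0) (iota 0 c) =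
          map (fun j => kk k j + 1) (iota 0 c).
  by apply/eq_in_map => j; rewrite mem_iota => /andP [_ h]; rewrite add0n in h; rewrite h.
rewrite sumn_map_add1 size_iota /kk map_nth_iota0 //; lia.
Qed.

Lemma size_flatten_nth (cols : seq (seq nat)) :
  size (flatten cols) = sumn (map (fun j => size (nth [::] cols j)) (iota 0 (size cols))).
Proof.
by rewrite size_flatten /shape -{1}(mkseq_nth [::] cols) /mkseq -map_comp.
Qed.

Definition Inv (k : seq nat) (D : seq int) m (cols : seq (seq nat)) :=
  [/\ size cols = nk k,
      perm_eq (flatten cols) (iota 1 m),
      forall j, j < nk k -> (nth [::] cols j != [::]) = (j < cnt D m) &
      forall j, j < nk k -> size (nth [::] cols j) <= kk k j + 1].

Lemma perm_set (cols : seq (seq nat)) j s m :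
  j < size cols -> perm_eq (flatten cols) (iota 1 m) ->
  perm_eq (flatten (set_nth [::] cols j (nth [::] cols j ++ s))) (iota 1 m ++ s).
Proof.
move=> hj hp.
have e1 : flatten cols = flatten (take j cols) ++ nth [::] cols j ++ flatten (drop j.+1 cols).
  by rewrite -{1}(cat_take_drop j cols) (drop_nth [::] hj) flatten_cat.
rewrite set_nthE hj flatten_cat /=.
apply/permP => p; have := permP hp p; rewrite e1 !count_cat; lia.
Qed.

Lemma find_first (s : seq (seq nat)) (a : pred (seq nat)) c :
  (forall i, i < c -> ~~ a (nth [::] s i)) -> c < size s -> a (nth [::] s c) ->
  find a s = c.
Proof.
elim: s c => [|x s IH] [|c] //= hb hc ha; first by rewrite ha.
have := hb 0 isT; rewrite /= => /negbTE ->; congr S; apply: IH => // i hi.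
exact: (hb i.+1).
Qed.

Lemma foldl_mem (F : nat -> nat -> nat) :
  (forall b j, (F b j == b) || (F b j == j)) ->
  forall js j0, foldl F j0 js \in j0 :: js.
Proof.
move=> hF; elim=> [|j1 js IH] j0 /=; first by rewrite inE eqxx.
have := IH (F j0 j1); rewrite !inE => /orP [/eqP -> | ->]; last by rewrite !orbT.
by case/orP: (hF j0 j1) => ->; rewrite ?orbT.
Qed.

Lemma pick_activeP (k : seq nat) cols :
  has (active k cols) (iota 0 (nk k)) ->
  exists j, pick_active k cols = Some j /\ j < nk k /\ active k cols j.
Proof.
rewrite has_filter /pick_active.
have hsub : forall j, j \in [seq j <- iota 0 (nk k) | active k cols j] -> j < nk k /\ active k cols j.
  by move=> j; rewrite mem_filter mem_iota add0n => /andP [-> /andP [_ ->]].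
case E: [seq j <- iota 0 (nk k) | active k cols j] hsub => [|j0 js] // hsub _.
eexists; split; first reflexivity.
apply: hsub; apply: foldl_mem => b j; by case: ifP; rewrite eqxx ?orbT.
Qed.

Lemma step_inv (k : seq nat) (D : seq int) m cols :
  [seq x <- D | (0 < x)%R] = [seq Posz m | m <- k] ->
  all (fun x : int => (0 < x)%R || (x == (-1)%R)) D ->
  (forall i, i <= size D -> i <= cnt D i + sumn (take (cnt D i) k)) ->
  m < size D -> Inv k D m cols -> Inv k D m.+1 (fill_step k D cols m.+1).
Proof.
move=> hf ha hdy hm [hsz hp hne hle].
have hcS := L_cntS hm.
have hck : cnt D m.+1 <= size k by rewrite -(L_cntD hf); apply: L_cnt_mono.
rewrite /fill_step /=; case: ifP => hneg.
- have hnp : (0 < nth 0%R D m)%R = false.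
    by apply/negbTE; rewrite -leNgt ltW.
  rewrite hnp addn0 in hcS.
  have hact : has (active k cols) (iota 0 (nk k)).
    apply/negPn/negP => /hasPn hn.
    have hs : forall j, j \in iota 0 (nk k) ->
        size (nth [::] cols j) = if j < cnt D m then kk k j + 1 else 0.
      move=> j hj; have hj' : j < nk k by move: hj; rewrite mem_iota.
      have := hn j hj; rewrite /active /col_of_state.
      have := hle j hj'. have := hne j hj'.
      case: (j < cnt D m) => /= h0 h1 h2.
        by move: h2; rewrite h0 /= => h2; apply/eqP; rewrite eqn_leq h1 leqNgt h2.
      by move: h0 => /negbT /negPn /eqP ->.
    have := size_flatten_nth cols; rewrite (perm_size hp) size_iota hsz.
    have -> : map (fun j => size (nth [::] cols j)) (iota 0 (nk k)) =
              map (fun j => if j < cnt D m then kk k j + 1 else 0) (iota 0 (nk k)).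
      by apply/eq_in_map.
    rewrite /nk L_capsum; last by rewrite -hcS.
    have := hdy m.+1 hm; rewrite hcS; lia.
  have [j [hpj [hj hactj]]] := pick_activeP hact.
  rewrite hpj /col_of_state -cats1.
  have hjc : j < cnt D m by rewrite -hne //; case/andP: hactj.
  split.
  + by rewrite size_set_nth hsz; apply/maxn_idPr.
  + have -> : iota 1 m.+1 = iota 1 m ++ [:: m.+1] by have := iotaD 1 m 1; rewrite addn1 add1n.
    by apply: perm_set => //; rewrite hsz.
  + move=> j' hj'; rewrite nth_set_nth /= hcS; have [-> | _] := eqVneq j' j; last exact: hne.
    by rewrite hjc; case: (nth [::] cols j).
  + move=> j' hj'; rewrite nth_set_nth /=; have [-> | _] := eqVneq j' j; last exact: hle.
    by case/andP: hactj => _; rewrite /col_of_state size_cat addn1 /=; lia.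
- have hpos : (0 < nth 0%R D m)%R.
    move: (all_nthP 0%R ha m hm) => /orP [// | /eqP e].
    by rewrite e in hneg.
  rewrite hpos in hcS.
  set c := cnt D m in hcS hne.
  have hc : c < nk k by rewrite /nk; move: hck; rewrite hcS; lia.
  have hcol : nth [::] cols c = [::].
    by apply/eqP; move: (hne c hc); rewrite ltnn => /negbT /negPn.
  have -> : find (fun c0 : seq nat => c0 == [::]) cols = c.
    apply: find_first; last by rewrite hcol.
      by move=> i hi; rewrite hne ?hi //; apply: ltn_trans hc.
    by rewrite hsz.
  rewrite hc.
  have -> : [:: m.+1] = nth [::] cols c ++ [:: m.+1] by rewrite hcol.
  split.
  + by rewrite size_set_nth hsz; apply/maxn_idPr.
  + have -> : iota 1 m.+1 = iota 1 m ++ [:: m.+1] by have := iotaD 1 m 1; rewrite addn1 add1n.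
    by apply: perm_set => //; rewrite hsz.
  + move=> j' hj'; rewrite nth_set_nth /= hcS; have [-> | hn] := eqVneq j' c.
      by rewrite hcol addn1 ltnSn.
    by rewrite hne // addn1 ltnS [in RHS]leq_eqVlt (negbTE hn).
  + move=> j' hj'; rewrite nth_set_nth /=; have [-> | _] := eqVneq j' c; last exact: hle.
    by rewrite hcol /=; lia.
Qed.

Lemma flatten_nseq0 n : flatten (nseq n ([::] : seq nat)) = [::].
Proof. by elim: n. Qed.

Lemma base_inv (k : seq nat) (D : seq int) :
  0 < size k -> cnt D 1 = 1 ->
  Inv k D 1 ([:: 1] :: nseq (nk k).-1 [::]).
Proof.
move=> hk hc; split.
- by rewrite /= size_nseq prednK.
- by rewrite /= flatten_nseq0.
- by move=> [|j] hj; rewrite hc //= nth_nseq; case: ifP.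
- move=> [|j] hj /=; first by rewrite addn1.
  by rewrite nth_nseq; case: ifP.
Qed.

Lemma fold_inv (k : seq nat) (D : seq int) :
  [seq x <- D | (0 < x)%R] = [seq Posz m | m <- k] ->
  all (fun x : int => (0 < x)%R || (x == (-1)%R)) D ->
  (forall i, i <= size D -> i <= cnt D i + sumn (take (cnt D i) k)) ->
  0 < size k -> 0 < size D ->
  forall m, 0 < m <= size D ->
  Inv k D m (foldl (fill_step k D) ([:: 1] :: nseq (nk k).-1 [::]) (iota 2 m.-1)).
Proof.
move=> hf ha hdy hk hD.
have hc1 : cnt D 1 = 1.
  have := hdy 1 hD; have := L_cnt_le D 1.
  case: (cnt D 1) => [|[|n]] //=; by rewrite take0.
elim=> [|m IH] //; case: m IH => [|m] IH; first by move=> _; exact: base_inv.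
move=> /andP [_ hm].
have -> : iota 2 m.+1 = iota 2 m ++ [:: m.+2].
  by have := iotaD 2 m 1; rewrite addn1 => ->.
rewrite foldl_cat /=; apply: step_inv => //.
by apply: IH; rewrite /= ltnW.
Qed.
Theorem mainTheorem9 (k : seq nat) (D : seq int) :
  0 < size k ->
  all (fun m => 0 < m) k ->
  inDk k D ->
  forall a, a \in vertices k D ->
    indeg k D a = outdeg k D a /\ outdeg k D a = size (Sset k D a).
Proof.
move=> hk _ [hs hf ha hd] a _; split; last exact: outdeg_S.
have hs' : size D = size k + sumn k by rewrite hs.
have hdy := L_dyck hf ha hd hs'.
have hD : 0 < size D by rewrite hs'; lia.
have [h1 h2 h3 h4] : Inv k D (size D) (T k D).
  rewrite /T /fillT; apply: fold_inv => //; by rewrite hD leqnn.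
apply: indeg_outdeg_gen => //.
move=> j hj.
have e1 := size_flatten_nth (T k D).
rewrite (perm_size h2) size_iota h1 hs' in e1.
have e2 : sumn (map (fun j => kk k j + 1) (iota 0 (nk k))) = size k + sumn k.
  have -> : size k + sumn k = size k + sumn (take (size k) k) by rewrite take_size.
  rewrite -(@L_capsum k (size k)) //; congr sumn.
  by apply/eq_in_map => i; rewrite mem_iota add0n => /andP [_ ->].
apply: (@sumn_map_eq (iota 0 (nk k)) (fun j => size (nth [::] (T k D) j))
          (fun j => kk k j + 1)).
- by move=> i; rewrite mem_iota add0n => /andP [_ hi]; apply: h4.
- by rewrite e2 -e1.
- by rewrite mem_iota add0n.
Qed.
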